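(* Let $n\ge2$ and $i,j\in\{0,\dots,n-1\}$. If $w\in W(\mathrm{C}_n)$ satisfies $w\beta_i=\beta_j$, then $we_iw^{-1}=e_j$ in $\mathrm{Br}(\mathrm{C}_n)$.
   Context: Let $R$ be a commutative ring with an invertible element $\delta$, and $n\ge1$. The Brauer algebra of type $\mathrm{C}_n$, $\mathrm{Br}(\mathrm{C}_n,R,\delta)$, is the unital associative $R$-algebra generated by $r_0,\dots,r_{n-1},e_0,\dots,e_{n-1}$ subject to the following relations, where for distinct $i,j\in\{0,\dots,n-1\}$ we write $i\sim j$ if $|i-j|=1$ and $i\nsim j$ otherwise: $r_i^2=1$ and $r_ie_i=e_ir_i=e_i$ for all $i$; $e_i^2=\delta^2e_i$ for $i>0$; $e_0^2=\delta e_0$; $r_ir_j=r_jr_i$, $e_ir_j=r_je_i$, $e_ie_j=e_je_i$ for $i\nsim j$; $r_ir_jr_i=r_jr_ir_j$, $r_jr_ie_j=e_ie_j$, $r_ie_jr_i=r_je_ir_j$ for $i\sim j$ with $i,j>0$; and $r_1r_0r_1r_0=r_0r_1r_0r_1$, $r_1r_0e_1=r_0e_1$, $r_1e_0r_1e_0=e_0e_1e_0$, $r_1r_0r_1e_0=e_0r_1r_0r_1$, $e_1r_0e_1=\delta e_1$, $e_1e_0e_1=\delta e_1$, $e_1r_0r_1=e_1r_0$, $e_1e_0r_1=e_1e_0$. Write $\mathrm{Br}(\mathrm{C}_n)=\mathrm{Br}(\mathrm{C}_n,\mathbb{Z}[\delta^{\pm1}],\delta)$. $W(\mathrm{C}_n)$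 is the subgroup of the multiplicative monoid of $\mathrm{Br}(\mathrm{C}_n)$ generated by $r_0,\dots,r_{n-1}$; it is isomorphic to the Weyl group of type $\mathrm{C}_n$ via $r_i\mapsto s_{\beta_i}$, where, with $f_1,\dots,f_n$ the standard basis of $\mathbb{R}^n$, $\beta_0=2f_1$ (long simple root) and $\beta_i=f_{i+1}-f_i$ for $1\le i\le n-1$ (short simple roots), and $s_\beta(x)=x-\frac{2(x,\beta)}{(\beta,\beta)}\beta$. Through this isomorphism $W(\mathrm{C}_n)$ acts on $\mathbb{R}^n$. *)

(* Defs.v *)
From HB Require Import structures.
From mathcomp Require Import all_boot all_order all_algebra.
Set Implicit Arguments. Unset Strict Implicit. Unset Printing Implicit Defensive.
Import Order.TTheory GRing.Theory Num.Theory.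
Local Open Scope ring_scope.

(* Indices 0..n-1 are natural numbers i < n.  Generators r_i, e_i of
   Br(C_n) are given as functions nat -> A (only values at i < n matter). *)

Definition adj (i j : nat) : bool := (i == j.+1) || (j == i.+1).

Record BrC_rels (A : pzRingType) (n : nat) (d : A) (r e : nat -> A) : Prop := {
  d_unit : exists d' : A, d * d' = 1 /\ d' * d = 1;
  d_central : forall x : A, d * x = x * d;
  rel_rr : forall i, (i < n)%N -> r i * r i = 1;
  rel_re : forall i, (i < n)%N -> r i * e i = e i;
  rel_er : forall i, (i < n)%N -> e i * r i = e i;
  rel_ee : forall i, (0 < i < n)%N -> e i * e i = d ^+ 2 * e i;
  rel_ee0 : e 0%N * e 0%N = d * e 0%N;
  rel_comm_rr : forall i j, (i < n)%N -> (j < n)%N -> i != j -> ~~ adj i j ->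
     r i * r j = r j * r i;
  rel_comm_er : forall i j, (i < n)%N -> (j < n)%N -> i != j -> ~~ adj i j ->
     e i * r j = r j * e i;
  rel_comm_ee : forall i j, (i < n)%N -> (j < n)%N -> i != j -> ~~ adj i j ->
     e i * e j = e j * e i;
  rel_braid : forall i j, (0 < i < n)%N -> (0 < j < n)%N -> adj i j ->
     r i * r j * r i = r j * r i * r j;
  rel_rre : forall i j, (0 < i < n)%N -> (0 < j < n)%N -> adj i j ->
     r j * r i * e j = e i * e j;
  rel_rer : forall i j, (0 < i < n)%N -> (0 < j < n)%N -> adj i j ->
     r i * e j * r i = r j * e i * r j;
  rel_C1 : r 1%N * r 0%N * r 1%N * r 0%N = r 0%N * r 1%N * r 0%N * r 1%N;
  rel_C2 : r 1%N * r 0%N * e 1%N = r 0%N * e 1%N;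
  rel_C3 : r 1%N * e 0%N * r 1%N * e 0%N = e 0%N * e 1%N * e 0%N;
  rel_C4 : r 1%N * r 0%N * r 1%N * e 0%N = e 0%N * r 1%N * r 0%N * r 1%N;
  rel_C5 : e 1%N * r 0%N * e 1%N = d * e 1%N;
  rel_C6 : e 1%N * e 0%N * e 1%N = d * e 1%N;
  rel_C7 : e 1%N * r 0%N * r 1%N = e 1%N * r 0%N;
  rel_C8 : e 1%N * e 0%N * r 1%N = e 1%N * e 0%N
}.

Definition rword (A : pzRingType) (r : nat -> A) (w : seq nat) : A :=
  \prod_(a <- w) r a.

(* Root system of type C_n in R^n (we use rational coordinates, which suffice:
   all roots and reflections are rational).  Coordinate k (0-based) is f_{k+1}. *)
Definition dotv (n : nat) (x y : 'rV[rat]_n) : rat := \sum_(k < n) x 0 k * y 0 k.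

Definition beta (n : nat) (i : nat) : 'rV[rat]_n :=
  \row_(k < n) (if i == 0%N then (if (k : nat) == 0%N then 2 else 0)
                else ((k : nat) == i)%:R - ((k : nat) == i.-1)%:R).

Definition refl (n : nat) (b x : 'rV[rat]_n) : 'rV[rat]_n :=
  x - (2 * dotv x b / dotv b b) *: b.

Definition wact (n : nat) (w : seq nat) (x : 'rV[rat]_n) : 'rV[rat]_n :=
  foldr (fun a y => refl (beta n a) y) x w.

(* Main.v *)
Require Import Defs.
From HB Require Import structures.
From mathcomp Require Import all_boot all_order all_algebra.
From mathcomp Require Import zify ring lra.
Import GRing.Theory.
Set Implicit Arguments. Unset Strict Implicit.
Local Open Scope ring_scope.
Definition tau (c k : nat) : nat :=
  if k == c then c.-1 else if k == c.-1 then c else k.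

Inductive root := Long of nat | Dm of nat & nat | Dp of nat & nat.

Definition valid (n : nat) (x : root) : bool :=
  match x with Long k => (k < n)%N | Dm a b => (a < b < n)%N | Dp a b => (a < b < n)%N end.

Definition sR (c : nat) (x : root) : root :=
  if c == 0%N then
    match x with
    | Long k => Long k
    | Dm a b => if a == 0%N then Dp a b else Dm a b
    | Dp a b => if a == 0%N then Dm a b else Dp a b
    end
  else
    match x with
    | Long k => Long (tau c k)
    | Dm a b => if (a == c.-1) && (b == c) then Dm a b else Dm (tau c a) (tau c b)
    | Dp a b => if (a == c.-1) && (b == c) then Dp a b else Dp (tau c a) (tau c b)
    end.

Lemma valid_sR n c x : (c < n)%N -> valid n x -> valid n (sR c x).
Proof.
move=> hc; rewrite /sR /tau; case: x => [k|a b|a b] /= hv;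
  repeat (case: eqP => ? /=); lia.
Qed.

Section Alg.
Variables (A : pzRingType) (n : nat) (d : A) (r e : nat -> A).
Hypothesis H : BrC_rels n d r e.
Hypothesis hn : (2 <= n)%N.

Lemma rr c : (c < n)%N -> r c * r c = 1.
Proof. move=> h; exact: (rel_rr H h). Qed.

Lemma crr c c' : (c < n)%N -> (c' < n)%N -> ((c'.+2 <= c) || (c.+2 <= c'))%N ->
  r c * r c' = r c' * r c.
Proof.
move=> h1 h2 h3; apply: (rel_comm_rr H) => //; first by apply/eqP; lia.
rewrite /adj; apply/negP; lia.
Qed.

Lemma cer c c' : (c < n)%N -> (c' < n)%N -> ((c'.+2 <= c) || (c.+2 <= c'))%N ->
  r c * e c' = e c' * r c.
Proof.
move=> h1 h2 h3; symmetry; apply: (rel_comm_er H) => //; first by apply/eqP; lia.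
rewrite /adj; apply/negP; lia.
Qed.

Lemma braid c : (0 < c)%N -> (c.+1 < n)%N ->
  r c * r c.+1 * r c = r c.+1 * r c * r c.+1.
Proof.
move=> h1 h2; apply: (rel_braid H); try (apply/andP; split; lia).
by rewrite /adj eqxx orbT.
Qed.

Lemma conj_comm x c : (c < n)%N -> r c * x = x * r c -> r c * x * r c = x.
Proof. by move=> hc h; rewrite h -mulrA rr // mulr1. Qed.

Lemma conj_inv x y c : (c < n)%N -> r c * x * r c = y -> r c * y * r c = x.
Proof. by move=> hc <-; rewrite !mulrA rr // mul1r -mulrA rr // mulr1. Qed.

Fixpoint Dw k := if k is k'.+1 then r k'.+1 * Dw k' else 1.
Fixpoint Uw k := if k is k'.+1 then Uw k' * r k'.+1 else 1.
Definition Tk (X : A) k := Dw k * X * Uw k.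

Lemma T_succ X k : Tk X k.+1 = r k.+1 * Tk X k * r k.+1.
Proof. by rewrite /Tk /= !mulrA. Qed.

Lemma Dw_comm c k : (c < n)%N -> (k.+2 <= c)%N -> r c * Dw k = Dw k * r c.
Proof.
move=> hc; elim: k => [|k IH] hk /=; first by rewrite mul1r mulr1.
by rewrite mulrA crr //; try lia; rewrite -mulrA IH ?mulrA //; lia.
Qed.

Lemma Uw_comm c k : (c < n)%N -> (k.+2 <= c)%N -> Uw k * r c = r c * Uw k.
Proof.
move=> hc; elim: k => [|k IH] hk /=; first by rewrite mul1r mulr1.
by rewrite -mulrA -crr //; try lia; rewrite mulrA IH ?mulrA //; lia.
Qed.

Lemma Dw_shift c k : (1 <= c)%N -> (c < k)%N -> (k < n)%N ->
  r c * Dw k = Dw k * r c.+1.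
Proof.
move=> h1; elim: k => [|k IH] // h2 h3 /=.
case: (ltngtP c k) => hck; [|lia|].
  rewrite mulrA crr; try lia. by rewrite -mulrA IH ?mulrA //; lia.
  subst c; case: k h1 h2 h3 IH => [|k] // _ _ h3 _ /=.
  rewrite !mulrA braid //; try lia.
  by rewrite -!mulrA; congr (_ * (_ * _)); rewrite Dw_comm //; lia.
Qed.

Lemma Uw_shift c k : (1 <= c)%N -> (c < k)%N -> (k < n)%N ->
  Uw k * r c = r c.+1 * Uw k.
Proof.
move=> h1; elim: k => [|k IH] // h2 h3 /=.
case: (ltngtP c k) => hck; [|lia|].
  rewrite -mulrA -crr; try lia. by rewrite mulrA IH -?mulrA //; lia.
  subst c; case: k h1 h2 h3 IH => [|k] // _ _ h3 _ /=.
  have E: Uw k * r k.+1 * r k.+2 * r k.+1 = Uw k * (r k.+1 * r k.+2 * r k.+1) by rewrite !mulrA.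
  rewrite /= E braid //; try lia. rewrite !mulrA Uw_comm //; try lia.
Qed.

Lemma T_tau X (hX : forall c, (2 <= c < n)%N -> r c * X = X * r c) c k :
  (1 <= c < n)%N -> (k < n)%N -> r c * Tk X k * r c = Tk X (tau c k).
Proof.
move=> /andP[c1 c2] hk; rewrite /tau.
case: eqP => [->|/eqP k1].
  case: c c1 c2 => // c _ c2 /=; rewrite T_succ !mulrA rr // mul1r -mulrA rr //.
  by rewrite mulr1.
case: eqP => [->|/eqP k2].
  by case: c c1 c2 k1 => // c _ c2 _ /=; rewrite T_succ.
case: (ltnP k c) => hkc.
  apply: conj_comm => //; rewrite /Tk !mulrA Dw_comm //; try lia.
  rewrite -(mulrA (Dw k)) hX; last (apply/andP; lia). by rewrite -!mulrA Uw_comm //; lia.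
rewrite /Tk !mulrA Dw_shift //; try lia.
rewrite -(mulrA (Dw k)) hX; last (apply/andP; lia).
rewrite -!mulrA Uw_shift //; try lia. rewrite (mulrA (r c.+1)) rr; last lia.
by rewrite mul1r !mulrA.
Qed.

Lemma T_r0 X (hX : forall c, (2 <= c < n)%N -> r c * X = X * r c)
  (h0 : r 0 * X * r 0 = X) (h1 : r 0 * (r 1 * X * r 1) * r 0 = r 1 * X * r 1) k :
  (k < n)%N -> r 0 * Tk X k * r 0 = Tk X k.
Proof.
elim: k => [|k IH] hk; first by rewrite /Tk /= mul1r mulr1.
case: k IH hk => [|k] IH hk.
  by rewrite T_succ /Tk /= !mul1r !mulr1.
rewrite (T_succ X k.+1).
move: IH; set T := Tk X k.+1 => IH; clearbody T.
have c1 : r 0 * r k.+2 = r k.+2 * r 0 by apply: crr; lia.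
rewrite !mulrA c1 -!mulrA -c1; congr (_ * _).
by rewrite !mulrA IH //; lia.
Qed.

Lemma cer' c c' : (c < n)%N -> (c' < n)%N -> ((c'.+2 <= c) || (c.+2 <= c'))%N ->
  r c * e c' * r c = e c'.
Proof. by move=> *; apply: conj_comm => //; apply: cer. Qed.

Fixpoint F b m := if m is m'.+1 then r (b - m) * F b m' * r (b - m) else e b.

Lemma F_succ b m : F b m.+1 = r (b - m.+1) * F b m * r (b - m.+1).
Proof. by []. Qed.

Lemma F_comm c b m : (c < n)%N -> (b < n)%N -> (m < b)%N ->
  ((b.+2 <= c) || (c.+2 <= b - m))%N -> r c * F b m = F b m * r c.
Proof.
move=> hc hb; elim: m => [|m IH] hm h /=; first (apply: cer; lia).
rewrite !mulrA crr; try lia. rewrite -!mulrA -crr; try lia.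
congr (_ * _); rewrite mulrA IH ?mulrA //; lia.
Qed.

Lemma F_braid c b m : (b < n)%N -> (m < b)%N -> (b - m < c < b)%N ->
  r c * F b m * r c = F b m.
Proof.
move=> hb; elim: m c => [|m IH] c hm hc; first lia.
rewrite F_succ.
have [hc'|hc'] := boolP (b - m < c)%N.
  have c1 : r c * r (b - m.+1) = r (b - m.+1) * r c by apply: crr; lia.
  rewrite !mulrA c1 -!mulrA -c1 (mulrA (r c)) (mulrA _ (r c)) IH //; lia.
have ec : c = (b - m.+1).+1%N by lia.
case: m IH hm hc hc' ec => [|m] IH hm hc hc' ec; first lia.
rewrite F_succ.
set x := (b - m.+2)%N in ec *.
have ex : (b - m.+1 = x.+1)%N by rewrite /x; lia.
rewrite ex ec.
have hF : r x * F b m * r x = F b m by apply: conj_comm; [lia|apply: F_comm; lia].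
move: hF; set G := F b m => hF; clearbody G.
have b1 : r x.+1 * r x * r x.+1 = r x * r x.+1 * r x by rewrite braid //; lia.
transitivity ((r x.+1 * r x * r x.+1) * G * (r x.+1 * r x * r x.+1)); first by rewrite !mulrA.
rewrite b1.
transitivity (r x * r x.+1 * (r x * G * r x) * r x.+1 * r x); first by rewrite !mulrA.
by rewrite hF !mulrA.
Qed.

Lemma F_up b m : (1 <= b)%N -> (b.+1 < n)%N -> (m < b)%N ->
  r b.+1 * F b m * r b.+1 = F b.+1 m.+1.
Proof.
move=> b1 b2; elim: m => [|m IH] hm.
  rewrite /= subSS subn0 (rel_rer H) //; try (apply/andP; lia).
  by rewrite /adj eqxx.
rewrite F_succ (F_succ b.+1) subSS.
have c1 : r b.+1 * r (b - m.+1) = r (b - m.+1) * r b.+1 by apply: crr; lia.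
move: IH; set G := F b m => IH; clearbody G.
rewrite -IH; last lia. rewrite !mulrA c1 -!mulrA -c1.
by rewrite !mulrA.
Qed.

Lemma conj3 c x y z : (c < n)%N ->
  r c * (x * y * z) * r c = (r c * x * r c) * (r c * y * r c) * (r c * z * r c).
Proof.
move=> hc; rewrite !mulrA -(mulrA _ (r c) (r c)) rr // mulr1.
by rewrite -(mulrA _ (r c) (r c)) rr // mulr1.
Qed.

Definition Er (x : root) : A :=
  match x with
  | Long k => Tk (e 0) k
  | Dm a b => F b (b - a.+1)
  | Dp a b => Tk (r 0) a * F b (b - a.+1) * Tk (r 0) a
  end.

Lemma hXe c : (2 <= c < n)%N -> r c * e 0 = e 0 * r c.
Proof. by move=> h; apply: cer; lia. Qed.
Lemma hXr c : (2 <= c < n)%N -> r c * r 0 = r 0 * r c.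
Proof. by move=> h; apply: crr; lia. Qed.

Lemma h0e : r 0 * e 0 * r 0 = e 0.
Proof. by rewrite (rel_re H) ?(rel_er H) //; lia. Qed.

Lemma h1e : r 0 * (r 1 * e 0 * r 1) * r 0 = r 1 * e 0 * r 1.
Proof.
have h : r 0 * r 1 * e 0 = r 1 * e 0 * r 1 * r 0 * r 1.
  transitivity (r 1 * (r 1 * r 0 * r 1 * e 0)).
    by rewrite !mulrA rr ?mul1r //; lia.
  by rewrite (rel_C4 H) !mulrA.
rewrite !mulrA h -(mulrA _ (r 1) (r 1)) rr ?mulr1; last lia.
by rewrite -(mulrA _ (r 0) (r 0)) rr ?mulr1 //; lia.
Qed.

Lemma h0r : r 0 * r 0 * r 0 = r 0.
Proof. by rewrite rr ?mul1r //; lia. Qed.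

Lemma h1r : r 0 * (r 1 * r 0 * r 1) * r 0 = r 1 * r 0 * r 1.
Proof.
rewrite !mulrA -(rel_C1 H) -(mulrA _ (r 0) (r 0)) rr ?mulr1 //; lia.
Qed.

Lemma Sp b : (b.+1 < n)%N ->
  r b.+1 * (Tk (r 0) b * e b.+1 * Tk (r 0) b) * r b.+1 = Tk (r 0) b * e b.+1 * Tk (r 0) b.
Proof.
elim: b => [|b IH] hb.
  rewrite /Tk /= !mul1r !mulr1 !mulrA (rel_C2 H) -!mulrA.
  by rewrite (mulrA (e 1)) (rel_C7 H).
have ct : r b.+2 * Tk (r 0) b = Tk (r 0) b * r b.+2.
  have h := T_tau hXr (c := b.+2) (k := b) ltac:(apply/andP; lia) ltac:(lia).
  move: h; rewrite /tau. have -> : (b == b.+2) = false by lia.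
  have -> : (b == b.+1) = false by lia.
  move: (Tk (r 0) b) => T h.
  by rewrite -{1}h !mulrA rr ?mul1r //; lia.
have hr : r b.+1 * e b.+2 * r b.+1 = r b.+2 * e b.+1 * r b.+2.
  apply: (rel_rer H); try (apply/andP; lia). by rewrite /adj eqxx orbT.
have ct' : Tk (r 0) b * r b.+2 = r b.+2 * Tk (r 0) b by rewrite ct.
move: IH ct ct'; rewrite T_succ; set T := Tk (r 0) b => IH ct ct'; clearbody T.
have eY : r b.+1 * T * r b.+1 * e b.+2 * (r b.+1 * T * r b.+1) =
    r b.+1 * r b.+2 * (T * e b.+1 * T) * r b.+2 * r b.+1.
  transitivity (r b.+1 * T * (r b.+1 * e b.+2 * r b.+1) * T * r b.+1); first by rewrite !mulrA.
  rewrite hr; transitivity (r b.+1 * (T * r b.+2) * e b.+1 * (r b.+2 * T) * r b.+1);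
    first by rewrite !mulrA.
  by rewrite -ct {2}ct !mulrA.
rewrite eY; move: (IH ltac:(lia)); set Y := T * e b.+1 * T => IHY; clearbody Y.
have b1 : r b.+2 * r b.+1 * r b.+2 = r b.+1 * r b.+2 * r b.+1 by rewrite braid //; lia.
transitivity ((r b.+2 * r b.+1 * r b.+2) * Y * (r b.+2 * r b.+1 * r b.+2)); first by rewrite !mulrA.
rewrite b1; transitivity (r b.+1 * r b.+2 * (r b.+1 * Y * r b.+1) * r b.+2 * r b.+1);
  first by rewrite !mulrA.
by rewrite IHY.
Qed.

Lemma Dm_key c a b : (1 <= c < n)%N -> (a < b < n)%N -> ~~ ((a == c.-1) && (b == c)) ->
  r c * F b (b - a.+1) * r c = F (tau c b) (tau c b - (tau c a).+1).
Proof.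
move=> /andP[c1 c2] /andP[ab bn] nf.
case: (eqVneq c a) => [ca|ca].
  subst c; rewrite /tau eqxx.
  have -> : (b == a) = false by lia. have -> : (b == a.-1) = false by lia.
  have -> : (b - a.-1.+1 = (b - a.+1).+1)%N by lia.
  rewrite F_succ. by have -> : (b - (b - a.+1).+1 = a)%N by lia.
case: (eqVneq c a.+1) => [ca1|ca1].
  subst c; rewrite /tau /=.
  have -> : (a == a.+1) = false by lia. rewrite eqxx.
  have -> : (b == a.+1) = false by move: nf; rewrite /= eqxx /=; lia.
  have -> : (b == a) = false by lia.
  have -> : (b - a.+1 = (b - a.+2).+1)%N by move: nf; rewrite /= eqxx /=; lia.
  rewrite F_succ. have -> : (b - (b - a.+2).+1 = a.+1)%N by move: nf; rewrite /= eqxx /=; lia.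
  by apply: conj_inv.
case: (eqVneq c b.+1) => [cb1|cb1].
  subst c; rewrite /tau /= eqxx.
  have -> : (a == b.+1) = false by lia. have -> : (a == b) = false by lia.
  have -> : (b == b.+1) = false by lia.
  have -> : (b.+1 - a.+1 = (b - a.+1).+1)%N by lia.
  rewrite F_up //; lia.
case: (eqVneq c b) => [cb|cb].
  subst c. have [b' eb] : exists b', b = b'.+1 by exists b.-1; lia.
  subst b; rewrite /tau /= eqxx.
  have -> : (a == b'.+1) = false by lia. have -> : (a == b') = false by move: nf; rewrite /= eqxx andbT; lia.
  have -> : (b'.+1 - a.+1 = (b' - a.+1).+1)%N by move: nf; rewrite /= eqxx andbT; lia.
  rewrite -F_up; try (move: nf; rewrite /= eqxx andbT; lia).
  by apply: conj_inv.
rewrite /tau.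
have -> : (a == c) = false by lia. have -> : (b == c) = false by lia.
have -> : (a == c.-1) = false by lia. have -> : (b == c.-1) = false by lia.
have [h|h] := boolP ((b.+2 <= c) || (c.+2 <= a.+1))%N.
  apply: conj_comm => //; apply: F_comm; lia.
apply: F_braid; lia.
Qed.

Lemma key c x : (c < n)%N -> valid n x -> r c * Er x * r c = Er (sR c x).
Proof.
move=> hc; rewrite /sR; case: eqP => [c0|/eqP c0].
  subst c; case: x => [k|a b|a b] /= hv.
  - apply: T_r0 => //; [exact: hXe|exact: h0e|exact: h1e].
  - case: eqP => [a0|/eqP a0].
      by subst a; rewrite /Er /Tk /= !mul1r !mulr1.
    apply: conj_comm => //; apply: F_comm; lia.
  - case: eqP => [a0|/eqP a0].
      subst a; rewrite /Tk /= !mul1r !mulr1; by apply: conj_inv.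
    rewrite conj3 //.
    have -> : r 0 * Tk (r 0) a * r 0 = Tk (r 0) a by apply: T_r0; [exact: hXr|exact: h0r|exact: h1r|lia].
    rewrite (@conj_comm (F b (b - a.+1))) //; apply: F_comm; lia.
case: x => [k|a b|a b] /= hv.
- apply: T_tau; [exact: hXe|apply/andP; lia|lia].
- case: ifP => [fl|nfl].
    move/andP: fl => [/eqP ea /eqP eb]; subst; rewrite /Er.
    have -> : (c - c.-1.+1 = 0)%N by lia.
    by rewrite /= (rel_re H) ?(rel_er H).
  by rewrite /Er Dm_key ?nfl //; apply/andP; lia.
- case: ifP => [fl|nfl].
    move/andP: fl => [/eqP ea /eqP eb]; subst; rewrite /Er.
    have -> : (c - c.-1.+1 = 0)%N by lia.
    have [b' eb] : exists b', c = b'.+1 by exists c.-1; lia.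
    subst c => /=. by apply: Sp.
  rewrite /Er conj3 // !(@T_tau (r 0)); try exact: hXr; try (apply/andP; lia); try lia.
  by rewrite Dm_key ?nfl //; apply/andP; lia.
Qed.

Lemma orbit w x : all (fun a => a < n)%N w -> valid n x ->
  rword r w * Er x * rword r (rev w) = Er (foldr sR x w) /\ valid n (foldr sR x w).
Proof.
elim: w => [|c w IH] /=.
  by move=> _ hv; rewrite /rword !big_nil mul1r mulr1.
move=> /andP[hc hw] hv; have [IH1 IH2] := IH hw hv.
split; last exact: valid_sR.
rewrite /rword big_cons rev_cons -cats1 big_cat big_seq1 /=.
rewrite -key //; rewrite -IH1 /rword !mulrA.
done.
Qed.

End Alg.

Definition vecf (x : root) (m : nat) : rat :=
  match x with
  | Long k => 2 * (m == k)%:R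
  | Dm a b => (m == b)%:R - (m == a)%:R
  | Dp a b => (m == a)%:R + (m == b)%:R
  end.

Definition rowf n (f : nat -> rat) : 'rV[rat]_n := \row_(m < n) f m.

Lemma dotv_rowf n f g : dotv (rowf n f) (rowf n g) = \sum_(k < n) f k * g k.
Proof. by apply: eq_bigr => k _; rewrite !mxE. Qed.

Lemma sum_delta n (f : nat -> rat) p : (p < n)%N ->
  \sum_(k < n) f k * ((k : nat) == p)%:R = f p.
Proof.
move=> hp; rewrite (bigD1 (Ordinal hp)) //= eqxx mulr1 big1 ?addr0 //.
move=> k hk; have -> : ((k : nat) == p) = false; last by rewrite mulr0.
by apply/negbTE; apply: contra hk => /eqP e; apply/eqP; apply: val_inj.
Qed.

Lemma beta0E n : beta n 0 = rowf n (fun m => 2 * (m == 0%N)%:R).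
Proof. by apply/rowP => m; rewrite !mxE /=; case: eqP => _; rewrite /= ?mulr1 ?mulr0. Qed.

Lemma betacE n c : c != 0%N -> beta n c = rowf n (fun m => (m == c)%:R - (m == c.-1)%:R).
Proof. by move=> /negbTE c0; apply/rowP => m; rewrite !mxE c0. Qed.

Lemma refl0 n f : (0 < n)%N ->
  refl (beta n 0) (rowf n f) = rowf n (fun m => if m == 0%N then - f m else f m).
Proof.
move=> hn; rewrite /refl beta0E !dotv_rowf.
have e1 : \sum_(k < n) f k * (2 * ((k:nat) == 0%N)%:R) = 2 * f 0%N.
  transitivity (\sum_(k < n) (2 * f k) * ((k:nat) == 0%N)%:R).
    by apply: eq_bigr => k _; ring.
  exact: (sum_delta (fun k => 2 * f k) hn).
have e2 : \sum_(k < n) 2 * ((k:nat) == 0%N)%:R * (2 * ((k:nat) == 0%N)%:R) = 4 :> rat.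
  transitivity (\sum_(k < n) (fun _ => 4 : rat) k * ((k:nat) == 0%N)%:R).
    by apply: eq_bigr => k _; case: eqP => _ /=; ring.
  exact: (sum_delta (fun k => 4 : rat) hn).
rewrite e1 e2; apply/rowP => m; rewrite !mxE; case: eqP => [->|_] /=.
  by field. by ring.
Qed.

Lemma reflc n f c : (0 < c < n)%N ->
  refl (beta n c) (rowf n f) = rowf n (fun m => f (tau c m)).
Proof.
move=> /andP[c1 c2]; have c0 : c != 0%N by lia.
rewrite /refl betacE // !dotv_rowf.
have e1 : \sum_(k < n) f k * (((k:nat) == c)%:R - ((k:nat) == c.-1)%:R) = f c - f c.-1.
  rewrite -(sum_delta f c2) -(@sum_delta n f c.-1); last lia.
  rewrite -sumrB; apply: eq_bigr => k _; ring.
have e2 : \sum_(k < n) (((k:nat) == c)%:R - ((k:nat) == c.-1)%:R) *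
      (((k:nat) == c)%:R - ((k:nat) == c.-1)%:R) = 2 :> rat.
  transitivity (\sum_(k < n) ((fun _ => 1 : rat) k * ((k:nat) == c)%:R + (fun _ => 1 : rat) k * ((k:nat) == c.-1)%:R)).
    apply: eq_bigr => k _.
    case: eqP => [->|h1]; case: eqP => [h2|h2] /=; try lia; ring.
  rewrite big_split /= (sum_delta (fun k => 1 : rat) c2) (@sum_delta n (fun k => 1 : rat) c.-1) /=; last lia.
  ring.
rewrite e1 e2; apply/rowP => m; rewrite !mxE /tau.
case: eqP => h1; case: eqP => h2 /=; try lia; rewrite ?h1 ?h2; field; done.
Qed.

Ltac brute := repeat (case: ifP => ? /=; try (exfalso; lia)); repeat (case: eqP => ? /=; try (exfalso; lia)); first [lia | (rewrite /= ?mulr1 ?mulr0 ?mul1r; lra)].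

Lemma vec_step n c x : (c < n)%N -> valid n x ->
  exists s : rat, (s = 1 \/ s = -1) /\
    refl (beta n c) (rowf n (vecf x)) = s *: rowf n (vecf (sR c x)).
Proof.
move=> hc hv; have [c0|c0] := eqVneq c 0%N.
  subst c; rewrite refl0 //; rewrite /sR /=.
  case: x hv => [k|a b|a b] /= hv.
  - exists (if k == 0%N then -1 else 1); split; first by case: ifP; [right|left].
    apply/rowP => m; rewrite !mxE /=. brute.
  - exists 1; split; first by left.
    apply/rowP => m; rewrite !mxE /=. brute.
  - exists 1; split; first by left.
    apply/rowP => m; rewrite !mxE /=. brute.
rewrite reflc; last (apply/andP; lia). rewrite /sR (negbTE c0).
case: x hv => [k|a b|a b] /= hv.
- exists 1; split; first by left.
  apply/rowP => m; rewrite !mxE /= /tau. brute.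
- exists (if (a == c.-1) && (b == c) then -1 else 1); split; first by case: ifP; [right|left].
  apply/rowP => m; rewrite !mxE /= /tau. brute.
- exists 1; split; first by left.
  apply/rowP => m; rewrite !mxE /= /tau. brute.
Qed.

Lemma refl_scale n (b x : 'rV[rat]_n) s : refl b (s *: x) = s *: refl b x.
Proof.
rewrite /refl.
have -> : dotv (s *: x) b = s * dotv x b.
  by rewrite /dotv mulr_sumr; apply: eq_bigr => k _; rewrite !mxE mulrA.
by rewrite scalerBr scalerA; congr (_ - _); congr (_ *: _); rewrite !mulrA (mulrC s).
Qed.

Lemma vec_orbit n w x : all (fun a => a < n)%N w -> valid n x ->
  exists s : rat, (s = 1 \/ s = -1) /\
    wact w (rowf n (vecf x)) = s *: rowf n (vecf (foldr sR x w)).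
Proof.
elim: w => [|c w IH] /=.
  by move=> _ _; exists 1; split; [left | rewrite scale1r].
move=> /andP[hc hw] hv; have [s [hs ->]] := IH hw hv.
have hv' : valid n (foldr sR x w).
  elim: w {IH hs} hw => [|c' w' IH'] //= /andP[h1 h2]; apply: valid_sR => //; exact: IH'.
rewrite refl_scale.
have [s' [hs' ->]] := vec_step hc hv'.
rewrite scalerA; exists (s * s'); split => //.
by case: hs => ->; case: hs' => ->; rewrite ?mul1r ?mulN1r ?opprK; [left|right|right|left].
Qed.

Definition base (j : nat) : root := if j == 0%N then Long 0 else Dm j.-1 j.

Lemma beta_base n j : beta n j = rowf n (vecf (base j)).
Proof.
apply/rowP => m; rewrite !mxE /base; case: eqP => [j0|/eqP j0] /=; first subst j.
  by case: eqP => _; rewrite /= ?mulr1 ?mulr0.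
by [].
Qed.

Lemma valid_base n j : (j < n)%N -> valid n (base j).
Proof. by rewrite /base; case: eqP => /= ?; lia. Qed.

Lemma base_inj n x j s : (j < n)%N -> valid n x -> (s = 1 \/ s = -1) ->
  rowf n (vecf x) = s *: rowf n (vecf (base j)) -> x = base j.
Proof.
move=> hj hv hs E.
have P m : (m < n)%N -> vecf x m = s * vecf (base j) m.
  move=> hm; have := congr1 (fun v : 'rV[rat]_n => v 0 (Ordinal hm)) E.
  by rewrite !mxE.
clear E; case: x hv P => [k|a b|a b] /= hv P.
- move: (P k hv); rewrite /base /= eqxx.
  case: (eqVneq j 0) => [j0|j0] /=.
    subst j; case: (eqVneq k 0) => [->|k0] //= h; exfalso; move: h.
    by case: hs => -> /=; lra.
  move=> h; exfalso; move: h.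
  case: hs => ->; repeat (case: eqP => ? /=); lra.
- have Ha := P a ltac:(lia); have Hb := P b ltac:(lia); move: Ha Hb.
  rewrite /base; case: (eqVneq j 0) => j0 /=; rewrite !eqxx.
  + move=> h1 h2; exfalso; move: h1 h2.
    case: hs => ->; repeat (case: eqP => ? /=); move=> h1 h2; first [lia | (exfalso; move: h1 h2; clear; move=> h1 h2; lra)].
  + move=> h1 h2; suff [-> ->] : a = j.-1 /\ b = j by []. move: h1 h2.
    case: hs => ->; repeat (case: eqP => ? /=); move=> h1 h2; first [lia | (exfalso; move: h1 h2; clear; move=> h1 h2; lra)].
- have Ha := P a ltac:(lia); have Hb := P b ltac:(lia); move: Ha Hb.
  rewrite /base; case: (eqVneq j 0) => j0 /=; rewrite !eqxx.
  + move=> h1 h2; exfalso; move: h1 h2.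
    case: hs => ->; repeat (case: eqP => ? /=); move=> h1 h2; first [lia | (exfalso; move: h1 h2; clear; move=> h1 h2; lra)].
  + move=> h1 h2; exfalso; move: h1 h2.
    case: hs => ->; repeat (case: eqP => ? /=); move=> h1 h2; first [lia | (exfalso; move: h1 h2; clear; move=> h1 h2; lra)].
Qed.

Lemma Er_base (A : pzRingType) (r e : nat -> A) i : Er r e (base i) = e i.
Proof.
rewrite /base; case: eqP => [->|/eqP i0]; first by rewrite /Er /Tk /= mul1r mulr1.
by rewrite /Er; have -> : (i - i.-1.+1 = 0)%N by lia.
Qed.

Theorem mainTheorem10 (n : nat) (hn : (2 <= n)%N) (i j : nat)
  (hi : (i < n)%N) (hj : (j < n)%N) (w : seq nat) (hw : all (fun a => a < n)%N w)
  (hbeta : wact w (beta n i) = beta n j)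
  (A : pzRingType) (d : A) (r e : nat -> A) (H : BrC_rels n d r e) :
  rword r w * e i * rword r (rev w) = e j.
Proof.
have hv := valid_base hi.
have [s [hs E]] := vec_orbit hw hv.
rewrite -beta_base hbeta beta_base in E.
have [O hv'] := orbit H hn hw hv.
have E' : rowf n (vecf (foldr sR (base i) w)) = s *: rowf n (vecf (base j)).
  rewrite E scalerA; case: hs => ->; by rewrite ?mul1r ?mulN1r ?opprK scale1r.
have eb := base_inj hj hv' hs E'.
by rewrite -(Er_base r e i) O eb Er_base.
Qed.
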